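(* Let $q\ge 3$, $s\in\mathbb{N}$, and let $Y_s=\{y_i\}_{i=1}^{2s}$ be any collection of points with $y_{2s}<\cdots<y_1<y_{2s}+2\pi=:y_0$. Then there exists a function $f\in\Delta^{(q)}(Y_s)\cap W^{q-2}$ such that $$E_n^{(q)}(f,Y_s)\ge C(q,Y_s),\qquad n\in\mathbb{N},$$ where $C(q,Y_s)>0$ depends only on $q$ and $Y_s$.
   Context: A function $f\in C[a,b]$ is called $q$-monotone ($q\ge 2$) if $f\in C^{q-2}(a,b)$ and $f^{(q-2)}$ is convex on $(a,b)$. For $Y_s$ as in the claim, $\Delta^{(q)}(Y_s)$ denotes the set of continuous $2\pi$-periodic functions $f:\mathbb{R}\to\mathbb{R}$ such that $(-1)^{i-1}f$ is $q$-monotone on $[y_i,y_{i-1}]$ for each $1\le i\le 2s$. For $r\in\mathbb{N}$, $W^r$ denotes the class of $2\pi$-periodic functions $f$ with $f^{(r-1)}$ locally absolutely continuous on $\mathbb{R}$ and $\operatorname{ess\,sup}_{x\in\mathbb{R}}|f^{(r)}(x)|\le 2$. $\mathcal{T}_n$ is the space of real trigonometric polynomials of degree $\le n$. For a continuous $2\pi$-periodic $g$, $\|g\|=\max_{x\in\mathbb{R}}|g(x)|$, and $E_n^{(q)}(g,Y_s):=\inf_{T_n\in\mathcal{T}_n\cap\Delta^{(q)}(Y_s)}\|g-T_n\|$. *)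

(* Defs.v *)
From Stdlib Require Import Reals Lra Lia.
From Coquelicot Require Import Coquelicot.
Open Scope R_scope.

Definition periodic_cont (f : R -> R) : Prop :=
  (forall x, continuous f x) /\ (forall x, f (x + 2 * PI) = f x).

Definition cont_on_closed (f : R -> R) (a b : R) : Prop :=
  forall x, a <= x <= b ->
    filterlim f (within (fun t => a <= t <= b) (locally x)) (locally (f x)).

Definition Cm_open (m : nat) (f : R -> R) (a b : R) : Prop :=
  forall k, (k <= m)%nat -> forall x, a < x < b ->
    ex_derive_n f k x /\ continuous (Derive_n f k) x.

Definition convex_open (g : R -> R) (a b : R) : Prop :=
  forall x y t, a < x < b -> a < y < b -> 0 <= t <= 1 ->
    g (t * x + (1 - t) * y) <= t * g x + (1 - t) * g y.

Definition q_monotone (q : nat) (f : R -> R) (a b : R) : Prop :=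
  cont_on_closed f a b /\ Cm_open (q - 2) f a b /\
  convex_open (Derive_n f (q - 2)) a b.

(* The points y_1, ..., y_{2s} are given by y : nat -> R (indices 1..2s used);
   y_0 := y_{2s} + 2 pi. *)
Definition yext (s : nat) (y : nat -> R) (i : nat) : R :=
  if Nat.eqb i 0 then y (2 * s)%nat + 2 * PI else y i.

Definition admissible_Y (s : nat) (y : nat -> R) : Prop :=
  forall i, (1 <= i <= 2 * s)%nat -> yext s y i < yext s y (i - 1).

Definition Delta_q (q s : nat) (y : nat -> R) (f : R -> R) : Prop :=
  periodic_cont f /\
  forall i, (1 <= i <= 2 * s)%nat ->
    q_monotone q (fun x => (-1) ^ (i - 1) * f x) (yext s y i) (yext s y (i - 1)).

Definition null_set (N : R -> Prop) : Prop :=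
  forall eps, 0 < eps -> exists a b : nat -> R,
    (forall n, a n <= b n) /\
    (forall x, N x -> exists n, a n < x < b n) /\
    (forall m, sum_f_R0 (fun n => b n - a n) m <= eps).

Definition loc_abs_continuous (g : R -> R) : Prop :=
  forall c d, c <= d -> forall eps, 0 < eps -> exists delta, 0 < delta /\
    forall (m : nat) (a b : nat -> R), (1 <= m)%nat ->
      (forall i, (i < m)%nat -> c <= a i /\ a i <= b i /\ b i <= d) ->
      (forall i j, (i < m)%nat -> (j < m)%nat -> i <> j ->
          b i <= a j \/ b j <= a i) ->
      sum_f_R0 (fun i => b i - a i) (m - 1) < delta ->
      sum_f_R0 (fun i => Rabs (g (b i) - g (a i))) (m - 1) < eps.

Definition W_class (r : nat) (f : R -> R) : Prop :=
  (forall x, f (x + 2 * PI) = f x) /\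
  (forall k, (k <= r - 1)%nat -> forall x, ex_derive_n f k x) /\
  loc_abs_continuous (Derive_n f (r - 1)) /\
  exists N : R -> Prop, null_set N /\
    forall x, ~ N x -> ex_derive (Derive_n f (r - 1)) x /\
                       Rabs (Derive (Derive_n f (r - 1)) x) <= 2.

Definition trig_poly (n : nat) (T : R -> R) : Prop :=
  exists a b : nat -> R, forall x,
    T x = sum_f_R0 (fun k => a k * cos (INR k * x) + b k * sin (INR k * x)) n.

Definition sup_norm (g : R -> R) : Rbar :=
  Lub_Rbar (fun r => exists x, r = Rabs (g x)).

Definition E_nq (n q s : nat) (y : nat -> R) (g : R -> R) : Rbar :=
  Glb_Rbar (fun r => exists T, trig_poly n T /\ Delta_q q s y T /\
                               sup_norm (fun x => g x - T x) = Finite r).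

(* Main.v *)
Require Import Defs.
From Stdlib Require Import Reals.
From Coquelicot Require Import Coquelicot.
From Stdlib Require Import Lra Lia FunctionalExtensionality ZArith.
Open Scope R_scope.

Definition Dh (h : R) (F : R -> R) : R -> R := fun x => F (x + h) - F x.
Fixpoint diffn (h : R) (k : nat) (F : R -> R) : R -> R :=
  match k with O => F | S k' => diffn h k' (Dh h F) end.

Lemma diffn_ext_win : forall k h F G x,
  (forall j, (j <= k)%nat -> F (x + INR j * h) = G (x + INR j * h)) ->
  diffn h k F x = diffn h k G x.
Proof.
  induction k; intros h F G x H.
  - simpl. specialize (H 0%nat (le_n _)). simpl in H.
    replace (x + 0 * h) with x in H by ring. exact H.
  - simpl. apply IHk. intros j hj. unfold Dh.
    replace (x + INR j * h + h) with (x + INR (S j) * h) by (rewrite S_INR; ring).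
    rewrite (H (S j)) by lia. rewrite (H j) by lia. reflexivity.
Qed.

Lemma diffn_lin : forall k h F G c x,
  diffn h k (fun z => F z + c * G z) x = diffn h k F x + c * diffn h k G x.
Proof.
  induction k; intros h F G c x.
  - reflexivity.
  - simpl. rewrite <- IHk. apply diffn_ext_win. intros j _. unfold Dh. ring.
Qed.

Lemma diffn_bound : forall k h D e x,
  (forall z, Rabs (D z) <= e) -> Rabs (diffn h k D x) <= 2 ^ k * e.
Proof.
  induction k; intros h D e x H.
  - simpl. rewrite Rmult_1_l. apply H.
  - simpl. replace (2 * 2 ^ k * e) with (2 ^ k * (2 * e)) by ring.
    apply IHk. intro z. unfold Dh.
    unfold Rminus. eapply Rle_trans. apply Rabs_triang.
    rewrite Rabs_Ropp. pose proof (H (z + h)). pose proof (H z). lra.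
Qed.

Lemma diffn_last : forall k h g x,
  (forall j, (j < k)%nat -> g (x + INR j * h) = 0) ->
  diffn h k g x = g (x + INR k * h).
Proof.
  induction k; intros h g x H.
  - simpl. f_equal. ring.
  - change (diffn h k (Dh h g) x = g (x + INR (S k) * h)). rewrite IHk.
    + unfold Dh. rewrite (H k) by lia. rewrite S_INR, Rminus_0_r. f_equal. ring.
    + intros j hj. unfold Dh.
      replace (x + INR j * h + h) with (x + INR (S j) * h) by (rewrite S_INR; ring).
      rewrite (H (S j)) by lia. rewrite (H j) by lia. ring.
Qed.

Definition chain (Fs : nat -> R -> R) : Prop :=
  forall j x, is_derive (Fs j) x (Fs (S j) x).

Lemma is_derive_shift : forall (F : R -> R) h x l,
  is_derive F (x + h) l -> is_derive (fun z => F (z + h)) x l.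
Proof.
  intros F h x l H.
  apply is_derive_Reals. apply is_derive_Reals in H.
  intros eps Heps. destruct (H eps Heps) as [d Hd].
  exists d. intros e He1 He2.
  replace (x + e + h) with (x + h + e) by ring. apply Hd; auto.
Qed.

Lemma gmvt : forall k h (Fs : nat -> R -> R), chain Fs -> 0 < h ->
  forall x, exists xi, x <= xi <= x + INR k * h /\
    diffn h k (Fs 0%nat) x = h ^ k * Fs k xi.
Proof.
  induction k; intros h Fs HF Hh x.
  - exists x. simpl. split; [lra|ring].
  - set (Gs := fun j z => Fs j (z + h) - Fs j z).
    assert (HG : chain Gs).
    { intros j z. unfold Gs. apply (is_derive_minus (fun z => Fs j (z + h)) (Fs j)).
      apply is_derive_shift. apply HF. apply HF. }
    destruct (IHk h Gs HG Hh x) as [xi1 [Hxi1 Heq]].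
    destruct (MVT_cor2 (Fs k) (Fs (S k)) xi1 (xi1 + h)) as [c [Hc1 Hc2]].
    { lra. }
    { intros c _. apply is_derive_Reals. apply HF. }
    exists c. split.
    + rewrite S_INR. nra.
    + simpl. change (diffn h k (Gs 0%nat) x = h * h ^ k * Fs (S k) c).
      rewrite Heq. unfold Gs. rewrite Hc1. ring.
Qed.


Lemma cont_eps : forall (g : R -> R) x, continuous g x -> forall eps, 0 < eps ->
  exists d, 0 < d /\ forall z, Rabs (z - x) < d -> Rabs (g z - g x) < eps.
Proof.
  intros g x Hc eps He.
  destruct (proj1 (filterlim_locally g (g x)) Hc (mkposreal eps He)) as [d Hd].
  exists d. split. apply cond_pos. intros z Hz. apply (Hd z). exact Hz.
Qed.


Lemma conv_d2 : forall (Fs : nat -> R -> R) m a b, chain Fs -> convex_open (Fs m) a b ->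
  forall x, a < x < b -> 0 <= Fs (S (S m)) x.
Proof.
  intros Fs m a b HF Hc x Hx.
  destruct (Rle_or_lt 0 (Fs (S (S m)) x)) as [H|H]; [exact H|exfalso].
  assert (Hcont : continuous (Fs (S (S m))) x).
  { apply (ex_derive_continuous (Fs (S (S m)))). eexists. apply HF. }
  destruct (cont_eps _ _ Hcont (- Fs (S (S m)) x / 2)) as [d [Hd Hd2]]. lra.
  set (h := Rmin d (Rmin (x - a) (b - x)) / 2).
  assert (Hh : 0 < h).
  { unfold h. apply Rmin_case; [lra| apply Rmin_case; lra]. }
  assert (Hh1 : h < d). { unfold h. pose proof (Rmin_l d (Rmin (x - a) (b - x))). lra. }
  assert (Hh2 : h < x - a). { unfold h. pose proof (Rmin_r d (Rmin (x - a) (b - x))).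
    pose proof (Rmin_l (x - a) (b - x)). lra. }
  assert (Hh3 : h < b - x). { unfold h. pose proof (Rmin_r d (Rmin (x - a) (b - x))).
    pose proof (Rmin_r (x - a) (b - x)). lra. }
  set (Gs := fun j => Fs (j + m)%nat).
  assert (HG : chain Gs). { intros j z. unfold Gs. apply HF. }
  destruct (gmvt 2 h Gs HG Hh (x - h)) as [xi [Hxi Heq]].
  simpl in Heq. unfold Dh in Heq. unfold Gs in Heq. simpl in Heq.
  replace (x - h + h + h) with (x + h) in Heq by ring.
  replace (x - h + h) with x in Heq by ring.
  pose proof (Hc (x - h) (x + h) (1/2)) as Hcv.
  replace (1 / 2 * (x - h) + (1 - 1 / 2) * (x + h)) with x in Hcv by field.
  assert (Hcv' : Fs m x <= 1 / 2 * Fs m (x - h) + (1 - 1 / 2) * Fs m (x + h)).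
  { apply Hcv; lra. }
  assert (Hneg : Fs (S (S m)) xi < 0).
  { assert (Rabs (xi - x) < d). { apply Rabs_def1; simpl in Hxi; lra. }
    specialize (Hd2 xi H0). apply Rabs_def2 in Hd2. lra. }
  assert (0 < h * (h * 1)) by nra.
  assert (h * (h * 1) * Fs (S (S m)) xi < 0).
  { nra. }
  lra.
Qed.

Lemma mono_up : forall (Fs : nat -> R -> R) j a b, chain Fs ->
  (forall z, a < z < b -> 0 <= Fs (S j) z) ->
  forall u v, a <= u -> u <= v -> v <= b -> Fs j u <= Fs j v.
Proof.
  intros Fs j a b HF Hpos u v Hu Huv Hv.
  destruct (Req_dec u v) as [E|E]. subst; lra.
  destruct (MVT_cor2 (Fs j) (Fs (S j)) u v) as [c [Hc1 Hc2]]. lra.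
  { intros c _. apply is_derive_Reals. apply HF. }
  assert (0 <= Fs (S j) c) by (apply Hpos; lra).
  assert (0 <= Fs (S j) c * (v - u)) by (apply Rmult_le_pos; lra). lra.
Qed.

Definition tchain (a b : nat -> R) (n : nat) : nat -> R -> R :=
  fun j x => sum_f_R0 (fun k => INR k ^ j * (a k * cos (INR k * x + INR j * (PI/2))
                                        + b k * sin (INR k * x + INR j * (PI/2)))) n.

Lemma is_derive_sum : forall (F : nat -> R -> R) (F' : nat -> R -> R) n x,
  (forall k, is_derive (F k) x (F' k x)) ->
  is_derive (fun x => sum_f_R0 (fun k => F k x) n) x (sum_f_R0 (fun k => F' k x) n).
Proof.
  intros F F' n x H. induction n.
  - simpl. apply H.
  - simpl. apply (is_derive_plus (fun x => sum_f_R0 (fun k => F k x) n) (F (S n))).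
    exact IHn. apply H.
Qed.

Lemma tchain_chain : forall a b n, chain (tchain a b n).
Proof.
  intros a b n j x. unfold tchain.
  apply (is_derive_sum (fun k x => INR k ^ j * (a k * cos (INR k * x + INR j * (PI/2))
                                        + b k * sin (INR k * x + INR j * (PI/2))))
     (fun k x => INR k ^ S j * (a k * cos (INR k * x + INR (S j) * (PI/2))
                                        + b k * sin (INR k * x + INR (S j) * (PI/2))))).
  intro k.
  evar (l : R).
  assert (Hd : is_derive (fun x => INR k ^ j * (a k * cos (INR k * x + INR j * (PI/2))
                                        + b k * sin (INR k * x + INR j * (PI/2)))) x l).
  { unfold l. auto_derive. auto. reflexivity. }
  replace (INR k ^ S j * (a k * cos (INR k * x + INR (S j) * (PI / 2)) +
              b k * sin (INR k * x + INR (S j) * (PI / 2)))) with l. exact Hd.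
  unfold l. rewrite S_INR.
  replace (INR k * x + (INR j + 1) * (PI / 2)) with ((INR k * x + INR j * (PI / 2)) + PI/2) by ring.
  rewrite (cos_plus (INR k * x + INR j * (PI / 2)) (PI/2)), (sin_plus (INR k * x + INR j * (PI / 2)) (PI/2)).
  rewrite cos_PI2, sin_PI2. simpl. ring.
Qed.

Lemma tchain_0 : forall a b n x,
  tchain a b n 0%nat x = sum_f_R0 (fun k => a k * cos (INR k * x) + b k * sin (INR k * x)) n.
Proof.
  intros. unfold tchain. apply sum_eq. intros i _. simpl.
  replace (INR i * x + 0 * (PI / 2)) with (INR i * x) by ring. ring.
Qed.


Lemma chain_Derive_n : forall Fs, chain Fs -> forall k x, Derive_n (Fs 0%nat) k x = Fs k x.
Proof.
  intros Fs HF k. induction k; intro x.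
  - reflexivity.
  - simpl. rewrite (Derive_ext _ (Fs k) x IHk). apply is_derive_unique. apply HF.
Qed.

Lemma chain_ex : forall Fs, chain Fs -> forall k x, ex_derive_n (Fs 0%nat) k x.
Proof.
  intros Fs HF k. destruct k; intro x.
  - simpl. exact I.
  - simpl. exists (Fs (S k) x). apply (is_derive_ext (Fs k)).
    intro t. symmetry. apply chain_Derive_n. exact HF. apply HF.
Qed.

Lemma T_side : forall m (Ts : nat -> R -> R) (T : R -> R) y1 y2 y0 h x0,
  chain Ts -> (forall x, Ts 0%nat x = T x) ->
  convex_open (Ts m) y1 y0 -> convex_open (fun x => - Ts m x) y2 y1 ->
  0 < h -> y2 <= x0 - INR (S m) * h -> x0 <= y1 -> y1 <= x0 + INR (S m) * h ->
  x0 + 2 * (INR (S m) * h) <= y0 ->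
  diffn h (S m) T x0 <= Rmax (diffn h (S m) T (x0 - INR (S m) * h))
                             (diffn h (S m) T (x0 + INR (S m) * h)).
Proof.
  intros m Ts T y1 y2 y0 h x0 HT HT0 Hc1 Hc2 Hh H1 H2 H3 H4.
  set (w := INR (S m) * h) in *.
  assert (Hw : 0 < w). { unfold w. apply Rmult_lt_0_compat. apply lt_0_INR. lia. exact Hh. }
  assert (Hext : forall z, diffn h (S m) T z = diffn h (S m) (Ts 0%nat) z).
  { intro z. apply diffn_ext_win. intros. symmetry. apply HT0. }
  rewrite !Hext.
  assert (Hup : forall u v, y1 <= u -> u <= v -> v <= y0 -> Ts (S m) u <= Ts (S m) v).
  { apply (mono_up Ts (S m) y1 y0 HT). intros z Hz. apply (conv_d2 Ts m y1 y0 HT Hc1 z Hz). }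
  set (Ns := fun j x => - Ts j x).
  assert (HN : chain Ns). { intros j x. unfold Ns. apply (is_derive_opp (Ts j)). apply HT. }
  assert (Hdn : forall u v, y2 <= u -> u <= v -> v <= y1 -> Ts (S m) v <= Ts (S m) u).
  { intros u v Hu Huv Hv.
    assert (Ns (S m) u <= Ns (S m) v).
    { apply (mono_up Ns (S m) y2 y1 HN); auto. intros z Hz.
      apply (conv_d2 Ns m y2 y1 HN Hc2 z Hz). }
    unfold Ns in H. lra. }
  destruct (gmvt (S m) h Ts HT Hh x0) as [x1 [Hx1 E1]].
  destruct (gmvt (S m) h Ts HT Hh (x0 - w)) as [xL [HxL EL]].
  destruct (gmvt (S m) h Ts HT Hh (x0 + w)) as [xR [HxR ER]].
  fold w in Hx1, HxL, HxR.
  rewrite E1, EL, ER.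
  assert (Hp : 0 < h ^ S m) by (apply pow_lt; exact Hh).
  destruct (Rle_or_lt x1 y1) as [C|C].
  - eapply Rle_trans; [|apply Rmax_l]. apply Rmult_le_compat_l. lra.
    apply Hdn; lra.
  - eapply Rle_trans; [|apply Rmax_r]. apply Rmult_le_compat_l. lra.
    apply Hup; lra.
Qed.


Definition LL := 2 * PI.
Lemma LL_pos : 0 < LL.
Proof. unfold LL. pose proof PI_RGT_0. lra. Qed.

Fixpoint P (m : nat) : R -> R :=
  match m with
  | O => fun _ => 1
  | S O => fun t => t - LL / 2
  | S ((S _) as m') => fun t => RInt (P m') 0 t - RInt (fun s => RInt (P m') 0 s) 0 LL / LL
  end.

Lemma is_derive_sub_const : forall (f : R -> R) c x l,
  is_derive f x l -> is_derive (fun t => f t - c) x l.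
Proof.
  intros f c x l H. apply is_derive_Reals. apply is_derive_Reals in H.
  replace l with (l - 0) by ring.
  apply (derivable_pt_lim_minus f (fun _ => c)). exact H. apply derivable_pt_lim_const.
Qed.

Lemma RInt_derive_all : forall (g : R -> R) a t,
  (forall z, continuous g z) -> is_derive (fun t => RInt g a t) t (g t).
Proof.
  intros g a t Hc. apply is_derive_RInt with (a := a).
  exists (mkposreal 1 Rlt_0_1). intros b _. apply RInt_correct.
  apply ex_RInt_continuous. intros; apply Hc.
  apply Hc.
Qed.

Lemma P_derive : forall m t, is_derive (P (S m)) t (P m t).
Proof.
  induction m; intro t.
  - simpl. apply is_derive_sub_const.
    apply is_derive_Reals. apply derivable_pt_lim_id.
  - change (is_derive (fun t => RInt (P (S m)) 0 t - RInt (fun s => RInt (P (S m)) 0 s) 0 LL / LL) t (P (S m) t)).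
    apply is_derive_sub_const. apply RInt_derive_all.
    intro z. apply (ex_derive_continuous (P (S m))). eexists. apply IHm.
Qed.

Lemma P_cont : forall m z, continuous (P m) z.
Proof.
  intros [|m] z.
  - simpl. apply continuous_const.
  - apply (ex_derive_continuous (P (S m))). eexists. apply P_derive.
Qed.

Lemma P_mean : forall m, RInt (P (S m)) 0 LL = 0.
Proof.
  intros [|m].
  - assert (H := is_RInt_derive (fun t => t * t / 2 - LL / 2 * t) (fun t => t - LL / 2) 0 LL).
    assert (H1 : forall x, Rmin 0 LL <= x <= Rmax 0 LL ->
       is_derive (fun t => t * t / 2 - LL / 2 * t) x ((fun t => t - LL / 2) x)).
    { intros x _. auto_derive. auto. field. }
    assert (H2 : forall x, Rmin 0 LL <= x <= Rmax 0 LL -> continuous (fun t => t - LL / 2) x).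
    { intros x _. apply (P_cont 1%nat). }
    specialize (H H1 H2).
    simpl. rewrite (is_RInt_unique _ _ _ _ H).
    unfold minus, plus, opp; simpl. field.
  - change (RInt (fun t => RInt (P (S m)) 0 t - RInt (fun s => RInt (P (S m)) 0 s) 0 LL / LL) 0 LL = 0).
    assert (Hc : forall z, continuous (fun t => RInt (P (S m)) 0 t) z).
    { intro z. apply (ex_derive_continuous (fun t => RInt (P (S m)) 0 t)). eexists.
      apply RInt_derive_all. apply P_cont. }
    rewrite (RInt_minus (fun t => RInt (P (S m)) 0 t) (fun _ => RInt (fun s => RInt (P (S m)) 0 s) 0 LL / LL)).
    + rewrite RInt_const. unfold minus, plus, opp, scal; simpl. unfold mult; simpl.
      pose proof LL_pos. field. lra.
    + apply ex_RInt_continuous. intros; apply Hc.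
    + apply ex_RInt_continuous. intros; apply continuous_const.
Qed.

Lemma P_per : forall m, P (S (S m)) LL = P (S (S m)) 0.
Proof.
  intro m. change (RInt (P (S m)) 0 LL - RInt (fun s => RInt (P (S m)) 0 s) 0 LL / LL =
     RInt (P (S m)) 0 0 - RInt (fun s => RInt (P (S m)) 0 s) 0 LL / LL).
  rewrite P_mean, RInt_point. reflexivity.
Qed.

Lemma is_derive_val : forall (f : R -> R) x l l', is_derive f x l -> l = l' -> is_derive f x l'.
Proof. intros; subst; auto. Qed.

Lemma deriv0_const : forall (phi : R -> R), (forall t, is_derive phi t 0) -> forall t, phi t = phi 0.
Proof.
  intros phi H t.
  destruct (Rtotal_order t 0) as [C|[C|C]].
  - destruct (MVT_cor2 phi (fun _ => 0) t 0 C) as [c [Hc _]].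
    { intros; apply is_derive_Reals; apply H. }
    lra.
  - subst; reflexivity.
  - destruct (MVT_cor2 phi (fun _ => 0) 0 t C) as [c [Hc _]].
    { intros; apply is_derive_Reals; apply H. }
    lra.
Qed.

Lemma P_D : forall k t, P (S k) t - P (S k) (t + LL) = - LL * t ^ k / INR (Factorial.fact k).
Proof.
  induction k; intro t.
  - simpl. field.
  - set (phi := fun t => P (S (S k)) t - P (S (S k)) (t + LL) + LL * t ^ (S k) / INR (Factorial.fact (S k))).
    assert (Hd : forall t, is_derive phi t 0).
    { intro z. unfold phi.
      assert (H1 : is_derive (fun t => LL * t ^ (S k) / INR (Factorial.fact (S k))) z
                    (LL * (INR (S k) * z ^ k) / INR (Factorial.fact (S k)))).
      { auto_derive. auto. change (match k with 0%nat => 1 | S _ => INR k + 1 end) with (INR (S k)). change (Factorial.fact k + k * Factorial.fact k)%nat with (Factorial.fact (S k)). field. apply INR_fact_neq_0. }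
      assert (H2 : is_derive (fun t => P (S (S k)) t - P (S (S k)) (t + LL)) z
                     (P (S k) z - P (S k) (z + LL))).
      { apply (is_derive_minus (P (S (S k))) (fun t => P (S (S k)) (t + LL))).
        apply P_derive. apply is_derive_shift. apply P_derive. }
      pose proof (is_derive_plus _ _ _ _ _ H2 H1) as H3.
      apply (is_derive_val _ _ _ _ H3).
      unfold plus; simpl. rewrite IHk. change (match k with 0%nat => 1 | S _ => INR k + 1 end) with (INR (S k)). change (Factorial.fact k + k * Factorial.fact k)%nat with (Factorial.fact (S k)). rewrite fact_simpl, mult_INR.
      field. split. apply INR_fact_neq_0. apply not_0_INR. lia. }
    pose proof (deriv0_const phi Hd t) as E. unfold phi in E.
    replace (0 + LL) with LL in E by ring. rewrite P_per in E.
    replace (0 ^ S k) with 0 in E by (simpl; ring).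
    assert (E2 : P (S (S k)) t - P (S (S k)) (t + LL) = - (LL * t ^ S k / INR (Factorial.fact (S k)))).
    { replace (LL * 0 / INR (Factorial.fact (S k))) with 0 in E.
      lra. field. apply INR_fact_neq_0. }
    rewrite E2. field. apply INR_fact_neq_0.
Qed.


Definition kb (c x : R) : R := c + LL * IZR (Int_part ((x - c) / LL)).
Definition dd (c x : R) : R := x - kb c x.
Definition Phi (c : R) (N : nat) (x : R) : R := P N (dd c x).

Lemma Int_part_unique : forall r z, IZR z <= r < IZR z + 1 -> Int_part r = z.
Proof.
  unfold Int_part. intros r z H.
  assert (E : (z + 1)%Z = up r). { apply tech_up; rewrite plus_IZR; simpl; lra. }
  lia.
Qed.

Lemma kb_spec : forall c x, kb c x <= x < kb c x + LL.
Proof.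
  intros c x. unfold kb. pose proof LL_pos as HL.
  destruct (base_Int_part ((x - c) / LL)) as [H1 H2].
  set (z := IZR (Int_part ((x - c) / LL))) in *.
  assert (E : x - c = LL * ((x - c) / LL)) by (field; lra).
  split.
  - assert (LL * z <= LL * ((x - c) / LL)) by (apply Rmult_le_compat_l; lra). lra.
  - assert (LL * ((x - c) / LL) < LL * (z + 1)) by (apply Rmult_lt_compat_l; lra). lra.
Qed.

Lemma kb_piece : forall c j x, c + LL * IZR j <= x < c + LL * IZR j + LL ->
  kb c x = c + LL * IZR j.
Proof.
  intros c j x H. unfold kb. pose proof LL_pos as HL.
  rewrite (Int_part_unique _ j). reflexivity.
  assert (E : (x - c) / LL = IZR j + (x - (c + LL * IZR j)) / LL) by (field; lra).
  rewrite E.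
  assert (0 <= (x - (c + LL * IZR j)) / LL).
  { apply Rmult_le_pos. lra. left. apply Rinv_0_lt_compat. lra. }
  assert ((x - (c + LL * IZR j)) / LL < 1).
  { apply (Rmult_lt_reg_l LL). lra. replace (LL * ((x - (c + LL * IZR j)) / LL)) with (x - (c + LL * IZR j)) by (field; lra). lra. }
  lra.
Qed.

Lemma kb_knot : forall c x, exists j, kb c x = c + LL * IZR j.
Proof. intros. exists (Int_part ((x - c) / LL)). reflexivity. Qed.

Lemma kb_kb : forall c x, kb c (kb c x) = kb c x.
Proof.
  intros c x. destruct (kb_knot c x) as [j E]. rewrite E. apply kb_piece.
  pose proof LL_pos. lra.
Qed.

Lemma kb_shift : forall c x, kb c (x + LL) = kb c x + LL.
Proof.
  intros c x. destruct (kb_knot c x) as [j E]. pose proof (kb_spec c x).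
  replace (kb c x + LL) with (c + LL * IZR (j + 1)) by (rewrite plus_IZR, E; simpl; ring).
  apply kb_piece. rewrite plus_IZR. simpl. lra.
Qed.

Lemma dd_per : forall c x, dd c (x + LL) = dd c x.
Proof. intros. unfold dd. rewrite kb_shift. ring. Qed.

Lemma dd_range : forall c x, 0 <= dd c x < LL.
Proof. intros. unfold dd. pose proof (kb_spec c x). lra. Qed.

Lemma dd_piece : forall c x0 x, kb c x0 = x0 -> x0 <= x < x0 + LL -> dd c x = x - x0.
Proof.
  intros c x0 x Hk Hx. unfold dd. destruct (kb_knot c x0) as [j E].
  rewrite (kb_piece c j x). rewrite <- E, Hk. reflexivity. rewrite <- E, Hk. exact Hx.
Qed.

Lemma dd_piece_left : forall c x0 x, kb c x0 = x0 -> x0 - LL <= x < x0 -> dd c x = x - x0 + LL.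
Proof.
  intros c x0 x Hk Hx. unfold dd. destruct (kb_knot c x0) as [j E].
  rewrite (kb_piece c (j - 1) x). rewrite minus_IZR. simpl.
  replace (c + LL * (IZR j - 1)) with (kb c x0 - LL) by (rewrite E; ring). rewrite Hk. ring.
  rewrite minus_IZR. simpl.
  replace (c + LL * (IZR j - 1)) with (kb c x0 - LL) by (rewrite E; ring). rewrite Hk. lra.
Qed.

Lemma locally_interval : forall (x a b : R) (Q : R -> Prop), a < x < b ->
  (forall z, a < z < b -> Q z) -> locally x Q.
Proof.
  intros x a b Q Hx HQ.
  assert (He : 0 < Rmin (x - a) (b - x)) by (apply Rmin_case; lra).
  exists (mkposreal _ He). intros z Hz.
  change (Rabs (z - x) < Rmin (x - a) (b - x)) in Hz.
  apply HQ. apply Rabs_def2 in Hz. destruct Hz.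
  pose proof (Rmin_l (x - a) (b - x)). pose proof (Rmin_r (x - a) (b - x)). lra.
Qed.

Lemma Phi_deriv_nk : forall c N x, kb c x < x -> is_derive (Phi c (S N)) x (Phi c N x).
Proof.
  intros c N x Hx. set (x0 := kb c x).
  pose proof (kb_spec c x). fold x0 in H. fold x0 in Hx.
  assert (Hk : kb c x0 = x0) by apply kb_kb.
  apply (is_derive_ext_loc (fun z => P (S N) (z + - x0))).
  - apply (locally_interval x x0 (x0 + LL)). lra.
    intros z Hz. unfold Phi. rewrite (dd_piece c x0 z Hk). reflexivity. lra.
  - unfold Phi. rewrite (dd_piece c x0 x Hk) by lra.
    apply is_derive_shift. apply P_derive.
Qed.

Lemma glue : forall (g G1 G2 : R -> R) x l d, 0 < d ->
  (forall z, x - d < z < x -> g z = G1 z) -> (forall z, x <= z < x + d -> g z = G2 z) ->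
  G1 x = g x -> is_derive G1 x l -> is_derive G2 x l -> is_derive g x l.
Proof.
  intros g G1 G2 x l d Hd H1 H2 E D1 D2.
  apply is_derive_Reals in D1. apply is_derive_Reals in D2. apply is_derive_Reals.
  intros eps He.
  destruct (D1 eps He) as [d1 Hd1]. destruct (D2 eps He) as [d2 Hd2].
  assert (Hm : 0 < Rmin d (Rmin d1 d2)).
  { pose proof (cond_pos d1). pose proof (cond_pos d2). apply Rmin_case; [lra|apply Rmin_case; lra]. }
  exists (mkposreal _ Hm). intros h Hh0 Hh. simpl in Hh.
  pose proof (Rmin_l d (Rmin d1 d2)). pose proof (Rmin_r d (Rmin d1 d2)).
  pose proof (Rmin_l d1 d2). pose proof (Rmin_r d1 d2).
  apply Rabs_def2 in Hh as Hh'. destruct Hh'.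
  destruct (Rlt_or_le h 0) as [C|C].
  - rewrite (H1 (x + h)) by lra. rewrite <- E. apply Hd1; auto. lra.
  - rewrite (H2 (x + h)) by lra. rewrite (H2 x) by lra. apply Hd2; auto. lra.
Qed.

Lemma Phi_deriv_knot : forall c M x, kb c x = x ->
  is_derive (Phi c (S (S (S M)))) x (Phi c (S (S M)) x).
Proof.
  intros c M x Hk. pose proof LL_pos as HL.
  assert (Hd0 : dd c x = 0) by (unfold dd; rewrite Hk; ring).
  apply (glue _ (fun z => P (S (S (S M))) (z + - x + LL)) (fun z => P (S (S (S M))) (z + - x)) x _ LL HL).
  - intros z Hz. unfold Phi. rewrite (dd_piece_left c x z Hk) by lra. reflexivity.
  - intros z Hz. unfold Phi. rewrite (dd_piece c x z Hk) by lra. reflexivity.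
  - unfold Phi. rewrite Hd0. replace (x + - x + LL) with LL by ring. apply P_per.
  - apply (is_derive_ext (fun z => P (S (S (S M))) (z + (- x + LL)))).
    intro t. f_equal. ring.
    apply is_derive_shift. unfold Phi. rewrite Hd0.
    apply (is_derive_val _ _ _ _ (P_derive _ _)).
    replace (x + (- x + LL)) with LL by ring. apply P_per.
  - apply is_derive_shift. unfold Phi. rewrite Hd0.
    apply (is_derive_val _ _ _ _ (P_derive _ _)). f_equal. ring.
Qed.

Lemma Phi_deriv3 : forall c N x, (3 <= N)%nat -> is_derive (Phi c N) x (Phi c (pred N) x).
Proof.
  intros c N x HN. destruct N as [|[|[|M]]]; try lia. simpl pred.
  pose proof (kb_spec c x). destruct (Req_dec (kb c x) x) as [E|E].
  - apply Phi_deriv_knot; auto.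
  - apply Phi_deriv_nk. lra.
Qed.

Lemma mvt_bound : forall (G G' : R -> R) a b K, (forall z, is_derive G z (G' z)) -> a <= b ->
  (forall z, a < z < b -> Rabs (G' z) <= K) -> Rabs (G b - G a) <= K * (b - a).
Proof.
  intros G G' a b K HD Hab HK.
  destruct (Req_dec a b) as [E|E]. subst. replace (G b - G b) with 0 by ring. rewrite Rabs_R0. lra.
  destruct (MVT_cor2 G G' a b) as [c [Hc1 Hc2]]. lra.
  { intros; apply is_derive_Reals; apply HD. }
  rewrite Hc1, Rabs_mult. rewrite (Rabs_right (b - a)) by lra.
  apply Rmult_le_compat_r. lra. apply HK; lra.
Qed.

Lemma P1_bound : forall t, 0 <= t <= LL -> Rabs (P 1 t) <= LL / 2.
Proof. intros t Ht. simpl. apply Rabs_le. lra. Qed.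

Lemma Phi2_lip : forall c a b, a <= b < a + LL -> Rabs (Phi c 2 b - Phi c 2 a) <= LL / 2 * (b - a).
Proof.
  intros c a b Hab. pose proof LL_pos as HL.
  set (x0 := kb c b). pose proof (kb_spec c b) as Hb. fold x0 in Hb.
  assert (Hk : kb c x0 = x0) by apply kb_kb.
  destruct (Rle_or_lt x0 a) as [C|C].
  - unfold Phi. rewrite (dd_piece c x0 a Hk) by lra. rewrite (dd_piece c x0 b Hk) by lra.
    apply (mvt_bound (fun z => P 2 (z + - x0)) (fun z => P 1 (z + - x0))).
    + intro z. apply is_derive_shift. apply P_derive.
    + lra.
    + intros z Hz. apply P1_bound. lra.
  - assert (E1 : Phi c 2 x0 = P 2 (x0 + - x0 + LL)).
    { unfold Phi. rewrite (dd_piece c x0 x0 Hk) by lra. replace (x0 + - x0 + LL) with LL by ring.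
      replace (x0 - x0) with 0 by ring. symmetry. apply (P_per 0). }
    assert (E2 : Phi c 2 a = P 2 (a + - x0 + LL)).
    { unfold Phi. rewrite (dd_piece_left c x0 a Hk) by lra. reflexivity. }
    assert (E3 : Phi c 2 b = P 2 (b + - x0)).
    { unfold Phi. rewrite (dd_piece c x0 b Hk) by lra. reflexivity. }
    assert (E4 : Phi c 2 x0 = P 2 (x0 + - x0)).
    { unfold Phi. rewrite (dd_piece c x0 x0 Hk) by lra. reflexivity. }
    assert (B1 : Rabs (Phi c 2 b - Phi c 2 x0) <= LL / 2 * (b - x0)).
    { rewrite E3, E4.
      apply (mvt_bound (fun z => P 2 (z + - x0)) (fun z => P 1 (z + - x0))).
      + intro z. apply is_derive_shift. apply P_derive.
      + lra.
      + intros z Hz. apply P1_bound. lra. }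
    assert (B2 : Rabs (Phi c 2 x0 - Phi c 2 a) <= LL / 2 * (x0 - a)).
    { rewrite E1, E2.
      replace (x0 + - x0 + LL) with (x0 + (- x0 + LL)) by ring.
      replace (a + - x0 + LL) with (a + (- x0 + LL)) by ring. apply (mvt_bound (fun z => P 2 (z + (- x0 + LL))) (fun z => P 1 (z + (- x0 + LL)))).
      + intro z. apply is_derive_shift. apply P_derive.
      + lra.
      + intros z Hz. apply P1_bound. lra. }
    replace (Phi c 2 b - Phi c 2 a) with ((Phi c 2 b - Phi c 2 x0) + (Phi c 2 x0 - Phi c 2 a)) by ring.
    eapply Rle_trans. apply Rabs_triang. lra.
Qed.

Lemma Phi2_cont : forall c x, continuous (Phi c 2) x.
Proof.
  intros c x. apply filterlim_locally. intros eps.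
  pose proof LL_pos as HL. pose proof (cond_pos eps) as He.
  assert (Hd : 0 < Rmin (LL / 2) (eps / (LL / 2 + 1))).
  { apply Rmin_case. lra. apply Rdiv_lt_0_compat; lra. }
  exists (mkposreal _ Hd). intros z Hz. change (Rabs (z - x) < Rmin (LL / 2) (eps / (LL / 2 + 1))) in Hz.
  change (Rabs (Phi c 2 z - Phi c 2 x) < eps).
  pose proof (Rmin_l (LL / 2) (eps / (LL / 2 + 1))). pose proof (Rmin_r (LL / 2) (eps / (LL / 2 + 1))).
  assert (Hk : LL / 2 * (eps / (LL / 2 + 1)) < eps).
  { replace (LL / 2 * (eps / (LL / 2 + 1))) with (eps * (LL / 2 / (LL / 2 + 1))) by (field; lra).
    assert (LL / 2 / (LL / 2 + 1) < 1). { apply (Rmult_lt_reg_r (LL/2+1)). lra.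
      replace (LL / 2 / (LL / 2 + 1) * (LL / 2 + 1)) with (LL/2) by (field; lra). lra. }
    nra. }
  apply Rabs_def2 in Hz. destruct Hz.
  destruct (Rle_or_lt x z) as [C|C].
  - pose proof (Phi2_lip c x z). assert (Rabs (Phi c 2 z - Phi c 2 x) <= LL / 2 * (z - x)) by (apply H3; lra).
    assert (LL / 2 * (z - x) <= LL / 2 * (eps / (LL / 2 + 1))) by (apply Rmult_le_compat_l; lra). lra.
  - pose proof (Phi2_lip c z x). assert (Rabs (Phi c 2 x - Phi c 2 z) <= LL / 2 * (x - z)) by (apply H3; lra).
    rewrite Rabs_minus_sym in H4.
    assert (LL / 2 * (x - z) <= LL / 2 * (eps / (LL / 2 + 1))) by (apply Rmult_le_compat_l; lra). lra.
Qed.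


Definition ff (p : nat) (c : R) : R -> R := fun x => -(1/2) * Phi c (S (S p)) x.

Lemma L_Dn : forall p c j x, (j <= p)%nat -> Derive_n (ff p c) j x = -(1/2) * Phi c (S (S p) - j) x.
Proof.
  intros p c j. induction j; intros x Hj.
  - simpl. unfold ff. reflexivity.
  - cbn [Derive_n]. rewrite (Derive_ext _ (fun z => -(1/2) * Phi c (S (S p) - j) z) x).
    2: { intro t. apply IHj. lia. }
    apply is_derive_unique. apply is_derive_scal.
    replace (S (S p) - S j)%nat with (pred (S (S p) - j)) by lia.
    apply Phi_deriv3. lia.
Qed.

Lemma L_exn : forall p c j x, (j <= p)%nat -> ex_derive_n (ff p c) j x.
Proof.
  intros p c [|j] x Hj.
  - simpl. exact I.
  - cbn [ex_derive_n]. exists (-(1/2) * Phi c (pred (S (S p) - j)) x).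
    apply (is_derive_ext (fun z => -(1/2) * Phi c (S (S p) - j) z)).
    intro t. symmetry. apply L_Dn. lia.
    apply is_derive_scal. apply Phi_deriv3. lia.
Qed.

Lemma L_Dtop : forall p c x, kb c x < x -> Derive_n (ff p c) (S p) x = -(1/2) * Phi c 1 x.
Proof.
  intros p c x Hx. cbn [Derive_n].
  rewrite (Derive_ext _ (fun z => -(1/2) * Phi c 2 z) x).
  2: { intro t. rewrite L_Dn by lia. replace (S (S p) - p)%nat with 2%nat by lia. reflexivity. }
  apply is_derive_unique. apply is_derive_scal. apply Phi_deriv_nk. exact Hx.
Qed.

Lemma L_exn_top : forall p c x, kb c x < x -> ex_derive_n (ff p c) (S p) x.
Proof.
  intros p c x Hx. cbn [ex_derive_n]. exists (-(1/2) * Phi c 1 x).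
  apply (is_derive_ext (fun z => -(1/2) * Phi c 2 z)).
  intro t. rewrite L_Dn by lia. replace (S (S p) - p)%nat with 2%nat by lia. reflexivity.
  apply is_derive_scal. apply Phi_deriv_nk. exact Hx.
Qed.

Lemma cont_cmul : forall (F : R -> R) k x, continuous F x -> continuous (fun z => k * F z) x.
Proof. intros F k x H. apply (continuous_scal_r k F x H). Qed.

Lemma ff_cont : forall p c x, continuous (ff p c) x.
Proof.
  intros p c x. unfold ff. apply cont_cmul. destruct p.
  - apply Phi2_cont.
  - apply (ex_derive_continuous (Phi c (S (S (S p))))). eexists. apply Phi_deriv3. lia.
Qed.

Lemma ff_per : forall p c x, ff p c (x + 2 * PI) = ff p c x.
Proof. intros. unfold ff, Phi. change (x + 2 * PI) with (x + LL). rewrite dd_per. reflexivity. Qed.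

Lemma knot_nbhd : forall c x0 z, kb c x0 = x0 -> x0 < z < x0 + LL -> kb c z = x0 /\ x0 < z.
Proof.
  intros c x0 z Hk Hz. pose proof (dd_piece c x0 z Hk) as E. unfold dd in E.
  split. assert (kb c z = x0) by (specialize (E ltac:(lra)); lra). auto. lra.
Qed.

Lemma L_Dn_cont : forall p c k x, (k <= S p)%nat -> kb c x < x -> continuous (Derive_n (ff p c) k) x.
Proof.
  intros p c k x Hk Hx.
  destruct (Nat.eq_dec k (S p)) as [E|E].
  - subst k. pose proof (kb_spec c x) as Hs.
    apply (continuous_ext_loc _ (fun z => -(1/2) * Phi c 1 z)).
    + apply (locally_interval x (kb c x) (kb c x + LL)). lra.
      intros z Hz. destruct (knot_nbhd c (kb c x) z (kb_kb c x) Hz) as [E1 E2].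
      symmetry. apply L_Dtop. lra.
    + apply cont_cmul. apply (ex_derive_continuous (Phi c 1)). eexists. apply Phi_deriv_nk. exact Hx.
  - apply (continuous_ext (fun z => -(1/2) * Phi c (S (S p) - k) z)).
    intro t. symmetry. apply L_Dn. lia.
    apply cont_cmul. replace (S (S p) - k)%nat with (S (S p - k)) by lia.
    apply (ex_derive_continuous (Phi c (S (S p - k)))). eexists. apply Phi_deriv_nk. exact Hx.
Qed.

Lemma L_affine : forall p c x0 z, kb c x0 = x0 -> x0 < z < x0 + LL ->
  Derive_n (ff p c) (S p) z = -(1/2) * (z - x0 - LL / 2).
Proof.
  intros p c x0 z Hk Hz. destruct (knot_nbhd c x0 z Hk Hz) as [E1 E2].
  rewrite L_Dtop by lra. unfold Phi. rewrite (dd_piece c x0 z Hk) by lra. simpl. reflexivity.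
Qed.

Lemma cont_within : forall (g : R -> R) a b x, continuous g x ->
  filterlim g (within (fun t => a <= t <= b) (locally x)) (locally (g x)).
Proof.
  intros g a b x H. intros P HP. specialize (H P HP).
  unfold filtermap, within in *. eapply filter_imp; [|exact H]. intros z Hz _. exact Hz.
Qed.

Lemma conv_comb : forall a b x y t, a < x < b -> a < y < b -> 0 <= t <= 1 ->
  a < t * x + (1 - t) * y < b.
Proof.
  intros a b x y t Hx Hy Ht.
  destruct (Rle_or_lt x y).
  - assert (0 <= (1 - t) * (y - x)) by (apply Rmult_le_pos; lra).
    assert (0 <= t * (y - x)) by (apply Rmult_le_pos; lra). nra.
  - assert (0 <= (1 - t) * (x - y)) by (apply Rmult_le_pos; lra).
    assert (0 <= t * (x - y)) by (apply Rmult_le_pos; lra). nra.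
Qed.

Lemma q_mono_ff : forall p c s x0 a b, kb c x0 = x0 -> x0 <= a -> b <= x0 + LL ->
  q_monotone (S (S (S p))) (fun x => s * ff p c x) a b.
Proof.
  intros p c s x0 a b Hk Ha Hb. unfold q_monotone.
  replace (S (S (S p)) - 2)%nat with (S p) by lia.
  split; [|split].
  - intros x _. apply (cont_within (fun x => s * ff p c x)). apply cont_cmul. apply ff_cont.
  - intros k Hkp x Hx. destruct (knot_nbhd c x0 x Hk ltac:(lra)) as [E1 E2].
    split.
    + apply ex_derive_n_scal_l. destruct (Nat.eq_dec k (S p)) as [E|E].
      * subst. apply L_exn_top. lra.
      * apply L_exn. lia.
    + apply (continuous_ext (fun z => s * Derive_n (ff p c) k z)).
      intro t. symmetry. apply Derive_n_scal_l.
      apply cont_cmul. apply L_Dn_cont. lia. lra.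
  - intros x y t Hx Hy Ht. rewrite !Derive_n_scal_l.
    assert (Hm : a < t * x + (1 - t) * y < b) by (apply conv_comb; auto).
    rewrite !(L_affine p c x0) by (auto; lra). right. ring.
Qed.


Lemma sum_nonneg : forall (A : nat -> R) N, (forall i, (i <= N)%nat -> 0 <= A i) -> 0 <= sum_f_R0 A N.
Proof.
  intros A N. induction N; intro H; simpl.
  - apply H; lia.
  - assert (0 <= sum_f_R0 A N) by (apply IHN; intros; apply H; lia).
    assert (0 <= A (S N)) by (apply H; lia). lra.
Qed.

Lemma term_le_sum : forall (A : nat -> R) N, (forall i, (i <= N)%nat -> 0 <= A i) ->
  forall i, (i <= N)%nat -> A i <= sum_f_R0 A N.
Proof.
  intros A N. induction N; intros H i Hi.
  - replace i with 0%nat by lia. simpl. lra.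
  - simpl. destruct (Nat.eq_dec i (S N)) as [E|E].
    + subst. assert (0 <= sum_f_R0 A N).
      { apply sum_nonneg. intros; apply H; lia. }
      lra.
    + assert (A i <= sum_f_R0 A N) by (apply IHN; [intros; apply H; lia| lia]).
      assert (0 <= A (S N)) by (apply H; lia). lra.
Qed.

Definition zz (n : nat) : Z :=
  if Nat.even n then Z.of_nat (Nat.div2 n) else (- Z.of_nat (Nat.div2 n) - 1)%Z.

Lemma zz_surj : forall j, exists n, zz n = j.
Proof.
  intro j. destruct (Z_le_gt_dec 0 j).
  - exists (2 * Z.to_nat j)%nat. unfold zz. rewrite Nat.even_even, Nat.div2_double.
    apply Z2Nat.id. exact l.
  - exists (2 * Z.to_nat (- j - 1) + 1)%nat. unfold zz. rewrite Nat.even_odd.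
    rewrite Nat.add_1_r, Nat.div2_succ_double. rewrite Z2Nat.id by lia. lia.
Qed.

Lemma geo_sum : forall eps m,
  sum_f_R0 (fun n => 2 * (eps / 2 ^ (S (S n)))) m = eps - eps / 2 ^ (S m).
Proof.
  intros eps m. induction m.
  - simpl. field.
  - rewrite tech5. rewrite IHm. simpl. field. apply pow_nonzero; lra.
Qed.

Lemma W_ff : forall p c, W_class (S p) (ff p c).
Proof.
  intros p c. pose proof LL_pos as HL.
  assert (Hg : forall z, Derive_n (ff p c) p z = -(1/2) * Phi c 2 z).
  { intro z. rewrite L_Dn by lia. replace (S (S p) - p)%nat with 2%nat by lia. reflexivity. }
  assert (Hlip : forall a b, a <= b < a + LL ->
     Rabs (Derive_n (ff p c) p b - Derive_n (ff p c) p a) <= LL / 4 * (b - a)).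
  { intros a b Hab. rewrite !Hg.
    replace (-(1/2) * Phi c 2 b - -(1/2) * Phi c 2 a) with (-(1/2) * (Phi c 2 b - Phi c 2 a)) by ring.
    rewrite Rabs_mult. pose proof (Phi2_lip c a b Hab).
    rewrite Rabs_left by lra. lra. }
  unfold W_class. replace (S p - 1)%nat with p by lia.
  split; [|split; [|split]].
  - apply ff_per.
  - intros k Hk x. apply L_exn. exact Hk.
  - intros cc d Hcd eps He.
    assert (Hd : 0 < Rmin LL (eps / (LL / 4 + 1))).
    { apply Rmin_case. lra. apply Rdiv_lt_0_compat; lra. }
    exists (Rmin LL (eps / (LL / 4 + 1))). split. exact Hd.
    intros m a b Hm Hab _ Hsum.
    pose proof (Rmin_l LL (eps / (LL / 4 + 1))). pose proof (Rmin_r LL (eps / (LL / 4 + 1))).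
    assert (Hterm : forall i, (i <= m - 1)%nat -> b i - a i <= sum_f_R0 (fun i => b i - a i) (m - 1)).
    { apply (term_le_sum (fun i => b i - a i)). intros i Hi. destruct (Hab i ltac:(lia)). lra. }
    eapply Rle_lt_trans.
    apply (sum_Rle _ (fun i => (b i - a i) * (LL / 4))).
    { intros i Hi. destruct (Hab i ltac:(lia)) as [H1 [H2 H3]]. pose proof (Hterm i Hi).
      rewrite Rmult_comm. apply Hlip. lra. }
    rewrite <- scal_sum.
    assert (Hk : LL / 4 * (eps / (LL / 4 + 1)) < eps).
    { replace (LL / 4 * (eps / (LL / 4 + 1))) with (eps * (LL / 4 / (LL / 4 + 1))) by (field; lra).
      assert (LL / 4 / (LL / 4 + 1) < 1). { apply (Rmult_lt_reg_r (LL/4+1)). lra.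
        replace (LL / 4 / (LL / 4 + 1) * (LL / 4 + 1)) with (LL/4) by (field; lra). lra. }
      nra. }
    assert (LL / 4 * sum_f_R0 (fun i => b i - a i) (m - 1) <= LL / 4 * (eps / (LL / 4 + 1))).
    { apply Rmult_le_compat_l; lra. }
    lra.
  - exists (fun x => kb c x = x). split.
    + intros eps He.
      exists (fun n => c + LL * IZR (zz n) - eps / 2 ^ (S (S n))).
      exists (fun n => c + LL * IZR (zz n) + eps / 2 ^ (S (S n))).
      split; [|split].
      * intro n. assert (0 < eps / 2 ^ (S (S n))) by (apply Rdiv_lt_0_compat; [lra| apply pow_lt; lra]). lra.
      * intros x Hx. destruct (kb_knot c x) as [j Ej]. destruct (zz_surj j) as [n En].
        exists n. rewrite En. assert (0 < eps / 2 ^ (S (S n))) by (apply Rdiv_lt_0_compat; [lra| apply pow_lt; lra]).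
        rewrite Hx in Ej. lra.
      * intro m. rewrite (sum_eq _ (fun n => 2 * (eps / 2 ^ (S (S n))))).
        rewrite geo_sum. assert (0 < eps / 2 ^ (S m)) by (apply Rdiv_lt_0_compat; [lra| apply pow_lt; lra]). lra.
        intros i _. ring.
    + intros x Hx. pose proof (kb_spec c x).
      assert (Hlt : kb c x < x) by (destruct H; destruct H; [auto| contradiction]).
      assert (D : is_derive (Derive_n (ff p c) p) x (-(1/2) * Phi c 1 x)).
      { apply (is_derive_ext (fun z => -(1/2) * Phi c 2 z)). intro; symmetry; apply Hg.
        apply is_derive_scal. apply Phi_deriv_nk. exact Hlt. }
      split. eexists; exact D.
      rewrite (is_derive_unique _ _ _ D). unfold Phi. simpl.
      pose proof (dd_range c x). pose proof PI_4. unfold LL in *.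
      apply Rabs_le. lra.
Qed.

Lemma adm_mono : forall s y, admissible_Y s y ->
  forall i j, (1 <= i)%nat -> (i <= j)%nat -> (j <= 2 * s)%nat -> y j <= y i.
Proof.
  intros s y Ha i j Hi Hij Hj. induction j.
  - lia.
  - destruct (Nat.eq_dec i (S j)). subst; lra.
    assert (y j <= y i) by (apply IHj; lia).
    specialize (Ha (S j) ltac:(lia)). unfold yext in Ha. simpl in Ha.
    replace (j - 0)%nat with j in Ha by lia.
    destruct j. lia. simpl in Ha. lra.
Qed.

Lemma knot_c : forall c, kb c c = c.
Proof.
  intro c. pose proof LL_pos. rewrite (kb_piece c 0 c). simpl. ring. simpl. lra.
Qed.

Lemma knot_cL : forall c, kb c (c - LL) = c - LL.
Proof.
  intro c. pose proof LL_pos. rewrite (kb_piece c (-1) (c - LL)). simpl. ring. simpl. lra.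
Qed.

Lemma Delta_ff : forall p s y, (1 <= s)%nat -> admissible_Y s y ->
  Delta_q (S (S (S p))) s y (ff p (y 1%nat)).
Proof.
  intros p s y Hs Ha. pose proof LL_pos as HL. set (c := y 1%nat).
  assert (H1 : y 1%nat < y (2 * s)%nat + 2 * PI).
  { specialize (Ha 1%nat ltac:(lia)). unfold yext in Ha. simpl in Ha. exact Ha. }
  split.
  - split. intro x. apply ff_cont. apply ff_per.
  - intros i Hi. destruct i as [|i]. lia.
    destruct i as [|i].
    + simpl. unfold yext. simpl.
      apply (q_mono_ff p c 1 c). apply knot_c.
      unfold c; lra.
      pose proof (adm_mono s y Ha 1 (2 * s) ltac:(lia) ltac:(lia) ltac:(lia)). unfold c, LL. replace (s + (s + 0))%nat with (2 * s)%nat by lia. lra.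
    + unfold yext. simpl Nat.eqb. cbv iota. replace (S (S i) - 1)%nat with (S i) by lia.
      apply (q_mono_ff p c _ (c - LL)).
      * apply knot_cL.
      * pose proof (adm_mono s y Ha (S (S i)) (2 * s) ltac:(lia) ltac:(lia) ltac:(lia)). unfold c, LL. lra.
      * pose proof (adm_mono s y Ha 1 (S i) ltac:(lia) ltac:(lia) ltac:(lia)). unfold c. lra.
Qed.


Definition Pd (M j : nat) (t : R) : R := if Nat.leb j M then P (M - j) t else 0.

Lemma Pd_chain : forall M j t, is_derive (Pd M j) t (Pd M (S j) t).
Proof.
  intros M j t. unfold Pd.
  destruct (Nat.leb j M) eqn:E1; destruct (Nat.leb (S j) M) eqn:E2.
  - apply Nat.leb_le in E2. replace (M - j)%nat with (S (M - S j)) by lia. apply P_derive.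
  - apply Nat.leb_le in E1. apply Nat.leb_gt in E2. replace (M - j)%nat with 0%nat by lia.
    simpl. apply is_derive_Reals. apply derivable_pt_lim_const.
  - apply Nat.leb_gt in E1. apply Nat.leb_le in E2. lia.
  - apply is_derive_Reals. apply derivable_pt_lim_const.
Qed.

Lemma Pd_0 : forall M t, Pd M 0 t = P M t.
Proof. intros. unfold Pd. simpl. rewrite Nat.sub_0_r. reflexivity. Qed.

Lemma Pd_M : forall M t, Pd M M t = 1.
Proof. intros. unfold Pd. rewrite Nat.leb_refl, Nat.sub_diag. reflexivity. Qed.

Lemma chain_as : forall (G : nat -> R -> R) a b, (forall j t, is_derive (G j) t (G (S j) t)) ->
  chain (fun j x => a * G j (x + b)).
Proof.
  intros G a b HG j x. apply is_derive_scal. apply is_derive_shift. apply HG.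
Qed.

Lemma node_bounds : forall x h j M, 0 < h -> (j <= M)%nat ->
  x <= x + INR j * h <= x + INR M * h.
Proof.
  intros x h j M Hh Hj. pose proof (pos_INR j). pose proof (le_INR _ _ Hj). nra.
Qed.

Lemma fside : forall p c h, 0 < h ->
  let M := S (S p) in let x0 := c + h / 2 - INR M * h in
  c - LL <= x0 - INR M * h -> x0 + 2 * (INR M * h) < c + LL ->
  diffn h M (ff p c) (x0 - INR M * h) = -(1/2) * h ^ M /\
  diffn h M (ff p c) (x0 + INR M * h) = -(1/2) * h ^ M /\
  diffn h M (ff p c) x0 = -(1/2) * h ^ M + LL / (2 * INR (fact (S p))) * (h / 2) ^ (S p).
Proof.
  intros p c h Hh M x0 HL HR. pose proof LL_pos as HLL.
  assert (Hk : kb c c = c) by apply knot_c.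
  assert (HM : 2 <= INR M). { unfold M. rewrite !S_INR. pose proof (pos_INR p). lra. }
  assert (HMh : 2 * h <= INR M * h) by nra.
  set (Sch := fun j x => -(1/2) * Pd M j (x + (- c + LL))).
  set (Rch := fun j x => -(1/2) * Pd M j (x + - c)).
  assert (CS : chain Sch) by (apply chain_as; apply Pd_chain).
  assert (CR : chain Rch) by (apply chain_as; apply Pd_chain).
  assert (Fleft : forall z, c - LL <= z < c -> ff p c z = Sch 0%nat z).
  { intros z Hz. unfold ff, Sch, Phi. rewrite Pd_0. rewrite (dd_piece_left c c z Hk Hz).
    f_equal. f_equal. ring. }
  assert (Fright : forall z, c <= z < c + LL -> ff p c z = Rch 0%nat z).
  { intros z Hz. unfold ff, Rch, Phi. rewrite Pd_0. rewrite (dd_piece c c z Hk Hz). reflexivity. }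
  split; [|split].
  - rewrite (diffn_ext_win _ _ _ (Sch 0%nat)).
    + destruct (gmvt M h Sch CS Hh (x0 - INR M * h)) as [xi [_ E]]. rewrite E.
      unfold Sch. rewrite Pd_M. ring.
    + intros j Hj. pose proof (node_bounds (x0 - INR M * h) h j M Hh Hj). apply Fleft.
      unfold x0 in *. lra.
  - rewrite (diffn_ext_win _ _ _ (Rch 0%nat)).
    + destruct (gmvt M h Rch CR Hh (x0 + INR M * h)) as [xi [_ E]]. rewrite E.
      unfold Rch. rewrite Pd_M. ring.
    + intros j Hj. pose proof (node_bounds (x0 + INR M * h) h j M Hh Hj). apply Fright.
      unfold x0 in *. lra.
  - set (cc := LL / (2 * INR (fact (S p)))).
    set (u := fun z => if Rlt_dec z c then 0 else (z - c) ^ (S p)).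
    rewrite (diffn_ext_win _ _ _ (fun z => Sch 0%nat z + cc * u z)).
    + rewrite diffn_lin. rewrite (diffn_last _ _ u).
      * destruct (gmvt M h Sch CS Hh x0) as [xi [_ E]]. rewrite E.
        unfold Sch. rewrite Pd_M. unfold u.
        destruct (Rlt_dec (x0 + INR M * h) c) as [C|C].
        { unfold x0 in C. lra. }
        replace (x0 + INR M * h - c) with (h / 2) by (unfold x0; ring). ring.
      * intros j Hj. unfold u. destruct (Rlt_dec (x0 + INR j * h) c) as [C|C]. reflexivity.
        exfalso. apply C. assert (INR j + 1 <= INR M) by (rewrite <- S_INR; apply le_INR; lia).
        unfold x0. nra.
    + intros j Hj. pose proof (node_bounds x0 h j M Hh Hj). unfold u.
      destruct (Rlt_dec (x0 + INR j * h) c) as [C|C].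
      * rewrite Fleft. ring. unfold x0 in *. lra.
      * rewrite Fright by (unfold x0 in *; lra).
        unfold Rch, Sch. rewrite !Pd_0.
        pose proof (P_D (S p) (x0 + INR j * h + - c)) as D.
        replace (x0 + INR j * h + - c + LL) with (x0 + INR j * h + (- c + LL)) in D by ring.
        change (S (S p)) with M in D.
        replace (x0 + INR j * h - c) with (x0 + INR j * h + - c) by ring.
        unfold cc. field_simplify_eq. 2: apply INR_fact_neq_0.
        replace (P M (x0 + INR j * h + - c)) with
          (P M (x0 + INR j * h + (- c + LL)) - LL * (x0 + INR j * h + - c) ^ S p / INR (fact (S p))) by lra.
        field. apply INR_fact_neq_0.
Qed.


Lemma convex_ext : forall f g a b, (forall z, f z = g z) -> convex_open f a b -> convex_open g a b.
Proof. intros f g a b E H x y t Hx Hy Ht. rewrite <- !E. apply H; auto. Qed.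

Theorem theorem1p3 :
  forall (q s : nat) (y : nat -> R),
    (3 <= q)%nat -> (1 <= s)%nat -> admissible_Y s y ->
    exists f : R -> R,
      Delta_q q s y f /\ W_class (q - 2) f /\
      exists C : R, 0 < C /\
        forall n : nat, (1 <= n)%nat -> Rbar_le (Finite C) (E_nq n q s y f).
Proof.
  intros q s y Hq Hs Ha.
  destruct q as [|[|[|p]]]; try lia.
  set (c := y 1%nat).
  exists (ff p c). split; [apply Delta_ff; auto|]. split; [apply W_ff|].
  pose proof LL_pos as HLL.
  set (y0 := y (2 * s)%nat + 2 * PI).
  set (y2 := y 2%nat).
  assert (H1 : c < y0).
  { specialize (Ha 1%nat ltac:(lia)). unfold yext in Ha. simpl in Ha. exact Ha. }
  assert (H2 : y2 < c).
  { specialize (Ha 2%nat ltac:(lia)). unfold yext in Ha. simpl in Ha. exact Ha. }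
  assert (H3 : y (2 * s)%nat <= y2) by (apply (adm_mono s y Ha); lia).
  set (M := S (S p)).
  assert (HM : 2 <= INR M). { unfold M. rewrite !S_INR. pose proof (pos_INR p). lra. }
  set (h := Rmin (c - y2) (y0 - c) / (2 * INR M + 2)).
  assert (Hmin : 0 < Rmin (c - y2) (y0 - c)) by (apply Rmin_case; lra).
  assert (Hh : 0 < h) by (unfold h; apply Rdiv_lt_0_compat; lra).
  assert (Hh2 : (2 * INR M + 2) * h = Rmin (c - y2) (y0 - c)) by (unfold h; field; lra).
  pose proof (Rmin_l (c - y2) (y0 - c)). pose proof (Rmin_r (c - y2) (y0 - c)).
  set (w := INR M * h).
  assert (Hw : 2 * h <= w) by (unfold w; nra).
  assert (Hw2 : (2 * INR M + 2) * h = 2 * w + 2 * h) by (unfold w; ring).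
  set (x0 := c + h / 2 - w).
  set (G := LL / (2 * INR (fact (S p))) * (h / 2) ^ (S p)).
  assert (HG : 0 < G).
  { unfold G. apply Rmult_lt_0_compat. apply Rdiv_lt_0_compat. lra.
    pose proof (INR_fact_lt_0 (S p)). lra. apply pow_lt. lra. }
  exists (G / 2 ^ (S M)). split. apply Rdiv_lt_0_compat. exact HG. apply pow_lt. lra.
  intros n Hn. unfold E_nq.
  apply (proj2 (Glb_Rbar_correct _)).
  intros r [T [HT [HD Hsup]]].
  assert (Hb : forall z, Rabs (ff p c z - T z) <= r).
  { intro z. destruct (Lub_Rbar_correct (fun r => exists x, r = Rabs (ff p c x - T x))) as [Hub _].
    unfold sup_norm in Hsup. rewrite Hsup in Hub. apply (Hub (Rabs (ff p c z - T z))). exists z. reflexivity. }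
  destruct HT as [a [b HTab]].
  set (Ts := tchain a b n).
  assert (CT : chain Ts) by apply tchain_chain.
  assert (HT0 : forall x, Ts 0%nat x = T x). { intro x. unfold Ts. rewrite tchain_0. symmetry. apply HTab. }
  assert (HDn : forall r0 k z, Derive_n (fun x => r0 * T x) k z = r0 * Ts k z).
  { intros r0 k z. rewrite Derive_n_scal_l. f_equal.
    rewrite (Derive_n_ext T (Ts 0%nat)). apply chain_Derive_n. exact CT.
    intro t. symmetry. apply HT0. }
  destruct HD as [_ HDi].
  assert (Cv1 : convex_open (Ts (S p)) c y0).
  { destruct (HDi 1%nat ltac:(lia)) as [_ [_ Hc]].
    unfold yext in Hc. cbn [Nat.eqb] in Hc. fold c y0 in Hc.
    eapply convex_ext; [|exact Hc]. intro z. rewrite HDn. simpl. ring. }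
  assert (Cv2 : convex_open (fun x => - Ts (S p) x) y2 c).
  { destruct (HDi 2%nat ltac:(lia)) as [_ [_ Hc]].
    unfold yext in Hc. cbn [Nat.eqb] in Hc. fold c y2 in Hc.
    eapply convex_ext; [|exact Hc]. intro z. rewrite HDn. simpl. ring. }
  assert (TS : diffn h M T x0 <= Rmax (diffn h M T (x0 - w)) (diffn h M T (x0 + w))).
  { apply (T_side (S p) Ts T c y2 y0 h x0 CT HT0 Cv1 Cv2 Hh); fold M w; unfold x0; lra. }
  destruct (fside p c h Hh) as [FL [FR F0]].
  { fold M w x0. assert (c - LL < y2). { unfold y0 in H1. unfold LL. lra. } unfold x0; lra. }
  { fold M w x0. assert (y0 < c + LL). { unfold y0, LL. lra. } unfold x0; lra. }
  fold M w x0 in FL, FR, F0. fold G in F0.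
  set (Dd := fun z => ff p c z - T z).
  assert (Hsplit : forall x, diffn h M (ff p c) x = diffn h M T x + diffn h M Dd x).
  { intro x. rewrite <- (Rmult_1_l (diffn h M Dd x)). rewrite <- diffn_lin.
    apply diffn_ext_win. intros. unfold Dd. ring. }
  assert (HB : forall x, Rabs (diffn h M Dd x) <= 2 ^ M * r) by (intro; apply diffn_bound; exact Hb).
  rewrite Hsplit in FL, FR, F0.
  pose proof (HB x0) as B0. pose proof (HB (x0 - w)) as BL. pose proof (HB (x0 + w)) as BR.
  apply Rabs_le_between in B0. apply Rabs_le_between in BL. apply Rabs_le_between in BR.
  change (G / 2 ^ S M <= r).
  assert (HGr : G <= 2 * 2 ^ M * r).
  { revert TS. apply Rmax_case; intro TS; lra. }
  apply (Rmult_le_reg_r (2 ^ S M)). apply pow_lt; lra.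
  replace (G / 2 ^ S M * 2 ^ S M) with G by (field; apply pow_nonzero; lra).
  replace (r * 2 ^ S M) with (2 * 2 ^ M * r) by (rewrite <- tech_pow_Rmult; ring). exact HGr.
Qed.
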